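(* Let $(D_i)_{i\in\mathbb N}$ be a sequence of nontrivial discrete groups, $G=\prod_{i\in\mathbb N}D_i$ with the product topology, and $H=\{g\in G:\{i:g(i)\neq e_{D_i}\}\text{ finite}\}$ with the topology induced from $G$. Then: (1) every sequence in $G$ converging to the neutral element $e$ is hyper-multipliable in $G$ (in particular hyper-converging); (2) every sequence in $H$ which is super-multipliable in $H$ is eventually neutral; (3) every sequence in $H$ which is hyper-multipliable in $H$ is eventually neutral.
   Context: $\prod_{k=1}^n a_k=a_1\cdots a_n$. A sequence $(g_n)$ in a topological group with neutral element $e$ is: eventually neutral if $\{n:g_n\ne e\}$ is finite; hyper-multipliable if for every integer sequence $(m_n)$, $\left(\prod_{k=1}^n g_k^{m_k}\right)_n$ converges in the group; super-multipliable if the same holds for all $(m_n)$ with values in $\{0,1\}$; hyper-converging if $g_n^{m_n}\to e$ for every integer sequence $(m_n)$. *)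

(* Defs.v *)
From Stdlib Require Import ZArith List.
Import ListNotations.
Open Scope Z_scope.

(* A group (no topology: each D_i carries the discrete topology). *)
Record Grp := {
  carrier :> Type;
  gmul : carrier -> carrier -> carrier;
  ginv : carrier -> carrier;
  gone : carrier;
  gmul_assoc : forall x y z, gmul x (gmul y z) = gmul (gmul x y) z;
  gmul_1l : forall x, gmul gone x = x;
  gmul_Vl : forall x, gmul (ginv x) x = gone
}.

Arguments gmul {_} _ _.
Arguments ginv {_} _.
Arguments gone {_}.

Definition nontrivial (D : Grp) : Prop := exists x : D, x <> gone.

Fixpoint gpow {D : Grp} (x : D) (n : nat) : D :=
  match n with O => gone | S k => gmul (gpow x k) x end.

Definition zpow {D : Grp} (x : D) (z : Z) : D :=
  match z with
  | Z0 => gone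
  | Zpos p => gpow x (Pos.to_nat p)
  | Zneg p => ginv (gpow x (Pos.to_nat p))
  end.

Section Product.
Variable D : nat -> Grp.

Definition PG : Type := forall i : nat, D i.
Definition pmul (x y : PG) : PG := fun i => gmul (x i) (y i).
Definition pone : PG := fun i => gone.
Definition pzpow (x : PG) (z : Z) : PG := fun i => zpow (x i) z.

Definition inH (x : PG) : Prop :=
  exists l : list nat, forall i, x i <> gone -> In i l.

(* Convergence in the product topology of discrete spaces: every basic
   neighbourhood of x (fixing finitely many coordinates, listed in F)
   eventually contains the sequence. *)
Definition conv (s : nat -> PG) (x : PG) : Prop :=
  forall F : list nat, exists N : nat, forall n, (N <= n)%nat ->
    forall i, In i F -> s n i = x i.

Fixpoint pprod (g : nat -> PG) (m : nat -> Z) (n : nat) : PG :=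
  match n with
  | O => pone
  | S k => pmul (pprod g m k) (pzpow (g k) (m k))
  end.

Definition eventually_neutral (g : nat -> PG) : Prop :=
  exists l : list nat, forall n, g n <> pone -> In n l.

Definition hyper_mult_G (g : nat -> PG) : Prop :=
  forall m : nat -> Z, exists x : PG, conv (pprod g m) x.

Definition hyper_conv_G (g : nat -> PG) : Prop :=
  forall m : nat -> Z, conv (fun n => pzpow (g n) (m n)) pone.

(* in H (induced topology: the limit must lie in H) *)
Definition hyper_mult_H (g : nat -> PG) : Prop :=
  forall m : nat -> Z, exists x : PG, inH x /\ conv (pprod g m) x.

Definition super_mult_H (g : nat -> PG) : Prop :=
  forall m : nat -> Z, (forall n, m n = 0 \/ m n = 1) ->
    exists x : PG, inH x /\ conv (pprod g m) x.
End Product.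

(* Main.v *)
Require Import Defs.
From Stdlib Require Import ZArith List Lia Classical ClassicalEpsilon FunctionalExtensionality FinFun.
Import ListNotations.

Lemma choice_fun {A B : Type} (P : A -> B -> Prop) :
  (forall a, exists b, P a b) -> exists f : A -> B, forall a, P a (f a).
Proof.
  intro H. exists (fun a => proj1_sig (constructive_indefinite_description _ (H a))).
  intro a. exact (proj2_sig (constructive_indefinite_description _ (H a))).
Qed.

Lemma mul_cancel_r (G : Grp) (a b : G) : gmul a b = a -> b = gone.
Proof.
  intro H. transitivity (gmul (gmul (ginv a) a) b).
  - rewrite gmul_Vl. symmetry. apply gmul_1l.
  - rewrite <- gmul_assoc, H. apply gmul_Vl.
Qed.

Lemma mulV_r (G : Grp) (x : G) : gmul x (ginv x) = gone.
Proof.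
  rewrite <- (gmul_1l G (gmul x (ginv x))).
  rewrite <- (gmul_Vl G (ginv x)) at 1.
  rewrite <- gmul_assoc. rewrite (gmul_assoc G (ginv x) x (ginv x)).
  rewrite gmul_Vl, gmul_1l. apply gmul_Vl.
Qed.

Lemma mul_1r (G : Grp) (x : G) : gmul x gone = x.
Proof.
  rewrite <- (gmul_Vl G x). rewrite gmul_assoc. rewrite mulV_r. apply gmul_1l.
Qed.

Lemma inv_one (G : Grp) : ginv (@gone G) = gone.
Proof. rewrite <- (mul_1r G (ginv gone)). apply gmul_Vl. Qed.

Lemma gpow_one (G : Grp) n : gpow (@gone G) n = gone.
Proof. induction n; simpl; [reflexivity|]. rewrite IHn. apply gmul_1l. Qed.

Lemma zpow_e (G : Grp) z : zpow (@gone G) z = gone.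
Proof. destruct z; simpl; rewrite ?gpow_one, ?inv_one; reflexivity. Qed.

Lemma zpow_1 (G : Grp) (x : G) : zpow x 1%Z = x.
Proof. simpl. apply gmul_1l. Qed.

Lemma pprod_stable (D : nat -> Grp) (g : nat -> PG D) m i N :
  (forall k, (N <= k)%nat -> g k i = gone) ->
  forall n, (N <= n)%nat -> pprod D g m n i = pprod D g m N i.
Proof.
  intros H n Hn. induction Hn; [reflexivity|].
  cbn [pprod]. unfold pmul, pzpow. rewrite H by lia. rewrite zpow_e, mul_1r. exact IHHn.
Qed.

Lemma part1 (D : nat -> Grp) (g : nat -> PG D) : conv D g (pone D) ->
     hyper_mult_G D g /\ hyper_conv_G D g.
Proof.
  intro Hc. split.
  - intro m. destruct (choice_fun _ Hc) as [Nf HNf].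
    exists (fun i => pprod D g m (Nf [i]) i).
    intro F. exists (Nf F). intros n Hn i Hi.
    assert (A : forall k, (Nf [i] <= k)%nat -> g k i = gone).
    { intros k Hk. apply (HNf [i] k Hk i). simpl; auto. }
    assert (B : forall k, (Nf F <= k)%nat -> g k i = gone).
    { intros k Hk. apply (HNf F k Hk i Hi). }
    rewrite (pprod_stable D g m i (Nf F) B n Hn).
    rewrite <- (pprod_stable D g m i (Nf F) B (Nat.max (Nf F) (Nf [i]))) by lia.
    apply (pprod_stable D g m i (Nf [i]) A). lia.
  - intros m F. destruct (Hc F) as [N HN]. exists N. intros n Hn i Hi.
    unfold pzpow. rewrite (HN n Hn i Hi). apply zpow_e.
Qed.

Fixpoint st (Nf : list nat -> nat) (sel : nat -> nat * nat) (L : nat -> list nat) (k : nat)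
  : list nat * nat :=
  match k with
  | O => (nil, O)
  | S k => (L (fst (sel (Nat.max (snd (st Nf sel L k)) (Nf (fst (st Nf sel L k)))))) ++ fst (st Nf sel L k),
            S (fst (sel (Nat.max (snd (st Nf sel L k)) (Nf (fst (st Nf sel L k)))))))
  end.

Lemma part2 (D : nat -> Grp) (g : nat -> PG D) : (forall n, inH D (g n)) ->
     super_mult_H D g -> eventually_neutral D g.
Proof.
  intros Hg Hs. apply NNPP; intro Hne.
  assert (Hc : forall F, exists N, forall n, (N<=n)%nat -> forall i, In i F -> g n i = gone).
  { intro F. destruct (Hs (fun _ => 1%Z) (fun _ => or_intror eq_refl)) as [x [_ Hx]].
    destruct (Hx F) as [N HN]. exists N. intros n Hn i Hi.
    pose proof (HN n Hn i Hi) as H1. pose proof (HN (S n) ltac:(lia) i Hi) as H2.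
    cbn [pprod] in H2. unfold pmul, pzpow in H2. rewrite zpow_1 in H2.
    rewrite <- H1 in H2. exact (mul_cancel_r _ _ _ H2). }
  assert (Hinf : forall N, exists p : nat*nat, (N <= fst p)%nat /\ g (fst p) (snd p) <> gone).
  { intro N. apply NNPP; intro C. apply Hne. exists (seq 0 N). intros n Hn.
    apply in_seq. split; [lia|]. destruct (Nat.lt_ge_cases n N); [lia|]. exfalso.
    apply Hn. apply functional_extensionality_dep. intro i. apply NNPP; intro Hi.
    apply C. exists (n,i). simpl. auto. }
  destruct (choice_fun _ Hc) as [Nf HNf].
  destruct (choice_fun _ Hinf) as [sel Hsel].
  destruct (choice_fun (fun n l => forall i, g n i <> gone -> In i l) Hg) as [L HL].
  set (S_ := fun k => fst (st Nf sel L k)).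
  set (nk := fun k => fst (sel (Nat.max (snd (st Nf sel L k)) (Nf (S_ k))))).
  set (ik := fun k => snd (sel (Nat.max (snd (st Nf sel L k)) (Nf (S_ k))))).
  assert (EqS : forall k, S_ (S k) = L (nk k) ++ S_ k) by reflexivity.
  assert (EqB : forall k, snd (st Nf sel L (S k)) = S (nk k)) by reflexivity.
  assert (Hk1 : forall k, (Nat.max (snd (st Nf sel L k)) (Nf (S_ k)) <= nk k)%nat).
  { intro k. apply (Hsel _). }
  assert (F4 : forall k, g (nk k) (ik k) <> gone).
  { intro k. apply (Hsel _). }
  assert (F1 : forall k, (nk k < nk (S k))%nat).
  { intro k. pose proof (Hk1 (S k)). rewrite EqB in H. lia. }
  assert (F2 : forall j k, (j < k)%nat -> (nk j < nk k)%nat).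
  { intros j k H. induction H; [apply F1|]. pose proof (F1 m). lia. }
  assert (F3 : forall k, (Nf (S_ k) <= nk k)%nat). { intro k. pose proof (Hk1 k). lia. }
  assert (F5 : forall k j, (k <= j)%nat -> incl (S_ k) (S_ j)).
  { intros k j H. induction H; [apply incl_refl|]. rewrite EqS.
    apply incl_appr. exact IHle. }
  assert (F6 : forall k, In (ik k) (S_ (S k))).
  { intro k. rewrite EqS. apply in_or_app. left. apply HL. apply F4. }
  assert (F7 : forall k, incl (L (nk k)) (S_ (S k))).
  { intro k. rewrite EqS. apply incl_appl, incl_refl. }
  assert (F8 : forall k, ~ In (ik k) (S_ k)).
  { intros k Hin. apply (F4 k). apply (HNf (S_ k) (nk k) (F3 k) _ Hin). }
  assert (Van : forall j k, j <> k -> g (nk j) (ik k) = gone).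
  { intros j k Hjk. destruct (Nat.lt_gt_cases j k) as [[H|H] _]; [exact Hjk| |].
    - apply NNPP; intro C. apply (F8 k). apply (F5 (S j) k ltac:(lia)).
      apply F7. apply HL. exact C.
    - apply (HNf (S_ j) (nk j) (F3 j)). apply (F5 (S k) j ltac:(lia)). apply F6. }
  assert (Inj : forall j k, nk j = nk k -> j = k).
  { intros j k H. destruct (Nat.lt_total j k) as [H1|[H1|H1]]; auto;
    pose proof (F2 _ _ H1); lia. }
  set (m := fun n => if excluded_middle_informative (exists k, nk k = n) then 1%Z else 0%Z).
  assert (Claim : forall k n, pprod D g m n (ik k) =
            if Nat.ltb (nk k) n then g (nk k) (ik k) else gone).
  { intros k n. induction n.
    - destruct (Nat.ltb_spec (nk k) 0); [lia|reflexivity].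
    - cbn [pprod]. unfold pmul, pzpow. rewrite IHn. unfold m.
      destruct (excluded_middle_informative (exists k, nk k = n)) as [[j Hj]|Hn].
      + rewrite zpow_1. destruct (Nat.eq_dec j k) as [->|Hjk].
        * subst n. destruct (Nat.ltb_spec (nk k) (nk k)); [lia|].
          destruct (Nat.ltb_spec (nk k) (S (nk k))); [|lia]. apply gmul_1l.
        * subst n. rewrite (Van j k Hjk), mul_1r.
          assert (nk j <> nk k) by (intro E; apply Hjk, Inj, E).
          destruct (Nat.ltb_spec (nk k) (nk j)), (Nat.ltb_spec (nk k) (S (nk j)));
            try reflexivity; lia.
      + cbn [zpow]. rewrite mul_1r.
        assert (nk k <> n) by (intro E; apply Hn; exists k; exact E).
        destruct (Nat.ltb_spec (nk k) n), (Nat.ltb_spec (nk k) (S n));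
          try reflexivity; lia. }
  assert (Hm : forall n, m n = 0%Z \/ m n = 1%Z).
  { intro n. unfold m. destruct (excluded_middle_informative _); auto. }
  destruct (Hs m Hm) as [x [[l Hl] Hx]].
  assert (Inl : forall k, In (ik k) l).
  { intro k. apply Hl. destruct (Hx [ik k]) as [N HN].
    rewrite <- (HN (Nat.max N (S (nk k))) ltac:(lia) (ik k) ltac:(simpl; auto)).
    rewrite Claim. destruct (Nat.ltb_spec (nk k) (Nat.max N (S (nk k)))); [|lia].
    apply F4. }
  assert (Injik : Injective ik).
  { intros j k E. destruct (Nat.lt_total j k) as [H1|[H1|H1]]; auto; exfalso.
    - apply (F8 k). rewrite <- E. apply (F5 (S j) k ltac:(lia)). apply F6.
    - apply (F8 j). rewrite E. apply (F5 (S k) j ltac:(lia)). apply F6. }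
  assert (ND : NoDup (map ik (seq 0 (S (length l))))).
  { apply Injective_map_NoDup; [exact Injik|apply seq_NoDup]. }
  assert (IC : incl (map ik (seq 0 (S (length l)))) l).
  { intros a Ha. apply in_map_iff in Ha. destruct Ha as [k [<- _]]. apply Inl. }
  pose proof (NoDup_incl_length ND IC) as Hlen.
  rewrite length_map, length_seq in Hlen. lia.
Qed.

Theorem proposition2p4 (D : nat -> Grp) (hD : forall i, nontrivial (D i)) :
  (forall g : nat -> PG D, conv D g (pone D) ->
     hyper_mult_G D g /\ hyper_conv_G D g) /\
  (forall g : nat -> PG D, (forall n, inH D (g n)) ->
     super_mult_H D g -> eventually_neutral D g) /\
  (forall g : nat -> PG D, (forall n, inH D (g n)) ->
     hyper_mult_H D g -> eventually_neutral D g).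
Proof.
  split; [exact (part1 D)|]. split; [exact (part2 D)|].
  intros g Hg Hh. apply (part2 D g Hg). intros m _. apply Hh.
Qed.
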